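(* Let $\mathcal{A}$ be a unital algebra over a field $F$ with $\operatorname{char}(F)\neq 2$. Then: (a) if $Z_J(\mathcal{A})=Z(\mathcal{A})$, then $\operatorname{JCent}(\mathcal{A})=\operatorname{Cent}(\mathcal{A})$; (b) if $Z_Q(\mathcal{A})=Z(\mathcal{A})$, then $\operatorname{QJCent}(\mathcal{A})=\operatorname{Cent}(\mathcal{A})$; (c) if $Z_Q(\mathcal{A})=Z_J(\mathcal{A})$, then $\operatorname{QJCent}(\mathcal{A})=\operatorname{JCent}(\mathcal{A})$.
   Context: $x\circ y=xy+yx$, $[x,y]=xy-yx$. $Z(\mathcal{A})$ is the center. $Z_J(\mathcal{A})=\{a: [[a,x],y]=0\ \forall x,y\in\mathcal{A}\}$, $Z_Q(\mathcal{A})=\{a: [a,[x,y]]=0\ \forall x,y\in\mathcal{A}\}$. $\operatorname{Cent}(\mathcal{A})$: linear $f:\mathcal{A}\to\mathcal{A}$ with $f(xy)=f(x)y=xf(y)$ for all $x,y$. $\operatorname{JCent}(\mathcal{A})$: linear $f$ with $f(x\circ y)=f(x)\circ y$ for all $x,y$. $\operatorname{QJCent}(\mathcal{A})$: linear $f$ with $f(x)\circ y=x\circ f(y)$ for all $x,y$. *)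

(* Defs.v *)
From mathcomp Require Import all_boot all_algebra.
Set Implicit Arguments. Unset Strict Implicit. Unset Printing Implicit Defensive.
Import GRing.Theory.
Local Open Scope ring_scope.

Definition jprod (R : pzRingType) (x y : R) : R := x * y + y * x.
Definition comm (R : pzRingType) (x y : R) : R := x * y - y * x.

Definition in_center (R : pzRingType) (a : R) : Prop := forall x : R, comm a x = 0.
Definition in_ZJ (R : pzRingType) (a : R) : Prop :=
  forall x y : R, comm (comm a x) y = 0.
Definition in_ZQ (R : pzRingType) (a : R) : Prop :=
  forall x y : R, comm a (comm x y) = 0.

Definition is_cent (F : fieldType) (A : algType F) (f : A -> A) : Prop :=
  linear f /\ forall x y : A, f (x * y) = f x * y /\ f (x * y) = x * f y.
Definition is_jcent (F : fieldType) (A : algType F) (f : A -> A) : Prop :=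
  linear f /\ forall x y : A, f (jprod x y) = jprod (f x) y.
Definition is_qjcent (F : fieldType) (A : algType F) (f : A -> A) : Prop :=
  linear f /\ forall x y : A, jprod (f x) y = jprod x (f y).

(* Main.v *)
Require Import Defs.
From mathcomp Require Import all_boot all_algebra.
Local Open Scope ring_scope.

Import GRing.Theory.
Set Implicit Arguments.
Lemma EJ (R : pzRingType) (c x y : R) :
  (c*(x*y+y*x) + (x*y+y*x)*c) - ((c*x+x*c)*y + y*(c*x+x*c)) = comm (comm c y) x.
Proof.
rewrite /comm !mulrDr !mulrDl !mulrN !mulNr !mulrA !opprD ?opprK !addrA.
by rewrite [LHS](ACl (((1*5)*(4*8))*(((2*7)*6)*3)))%AC /= !subrr !add0r.
Qed.
Lemma EQ (R : pzRingType) (c x y : R) :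
  ((c*x+x*c)*y + y*(c*x+x*c)) - (x*(c*y+y*c) + (c*y+y*c)*x) = comm c (comm x y).
Proof.
rewrite /comm !mulrDr !mulrDl !mulrN !mulNr !mulrA !opprD ?opprK !addrA.
by rewrite [LHS](ACl (((2*5)*(3*8))*(((1*7)*6)*4)))%AC /= !subrr !add0r.
Qed.

Lemma two_cancel (F : fieldType) (A : algType F) (hF : (2 \notin [pchar F])%N)
  (u v : A) : u *+ 2 = v *+ 2 -> u = v.
Proof.
move=> h.
have h2 : (2%:R : F) != 0.
  apply: contra hF => h0; by rewrite inE /= h0.
by rewrite -(scalerK h2 u) scaler_nat h -scaler_nat scalerK.
Qed.

Lemma addf (F : fieldType) (A : algType F) (f : A -> A) (hl : linear f) u v :
  f (u + v) = f u + f v.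
Proof. by have := hl 1 u v; rewrite !scale1r. Qed.

Lemma jprod2 (R : pzRingType) (u y : R) : jprod (u *+ 2) y = (jprod u y) *+ 2.
Proof. by rewrite /jprod mulrnAl mulrnAr mulrnDl. Qed.

Lemma jprod2r (R : pzRingType) (u y : R) : jprod y (u *+ 2) = (jprod y u) *+ 2.
Proof. by rewrite /jprod mulrnAl mulrnAr mulrnDl. Qed.

Lemma jform (F : fieldType) (A : algType F) (f : A -> A) :
  is_jcent f -> forall x, f x *+ 2 = f 1 * x + x * f 1.
Proof.
move=> [hl h] x; have := h 1 x; rewrite /jprod mul1r mulr1 -mulr2n.
by rewrite mulr2n addf // -mulr2n.
Qed.

Lemma qform (F : fieldType) (A : algType F) (f : A -> A) :
  is_qjcent f -> forall x, f x *+ 2 = f 1 * x + x * f 1.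
Proof.
move=> [hl h] x; have := h x 1; rewrite /jprod mul1r mulr1 -mulr2n => ->.
by rewrite addrC.
Qed.

Lemma jZJ (F : fieldType) (A : algType F) (f : A -> A) :
  is_jcent f -> in_ZJ (f 1).
Proof.
move=> hj y x; have hf := jform hj; case: hj => hl h.
rewrite -EJ; apply/eqP; rewrite subr_eq0; apply/eqP.
rewrite -hf h -jprod2 hf /jprod //.
Qed.

Lemma jback (F : fieldType) (A : algType F) (hF : (2 \notin [pchar F])%N)
  (f : A -> A) (c : A) :
  linear f -> in_ZJ c -> (forall x, f x *+ 2 = c * x + x * c) -> is_jcent f.
Proof.
move=> hl hc hf; split => // x y; apply: (@two_cancel F A hF).
rewrite hf -jprod2 hf; apply/eqP; rewrite -subr_eq0; apply/eqP.
by rewrite /jprod EJ hc.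
Qed.

Lemma qZQ (F : fieldType) (A : algType F) (f : A -> A) :
  is_qjcent f -> in_ZQ (f 1).
Proof.
move=> hj x y; have hf := qform hj; case: hj => hl h.
rewrite -EQ; apply/eqP; rewrite subr_eq0; apply/eqP.
rewrite -!hf -/(jprod (f x *+ 2) y) -/(jprod x (f y *+ 2)) jprod2 jprod2r h //.
Qed.

Lemma qback (F : fieldType) (A : algType F) (hF : (2 \notin [pchar F])%N)
  (f : A -> A) (c : A) :
  linear f -> in_ZQ c -> (forall x, f x *+ 2 = c * x + x * c) -> is_qjcent f.
Proof.
move=> hl hc hf; split => // x y; apply: (@two_cancel F A hF).
rewrite -jprod2 -jprod2r !hf; apply/eqP; rewrite -subr_eq0; apply/eqP.
by rewrite /jprod EQ hc.
Qed.

Lemma centC (R : pzRingType) (c x : R) : in_center c -> x * c = c * x.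
Proof. by move=> h; apply/esym/subr0_eq/h. Qed.

Lemma cform (F : fieldType) (A : algType F) (f : A -> A) :
  is_cent f -> in_center (f 1) /\ forall x, f x = f 1 * x.
Proof.
move=> [hl h]; have e1 x : f x = f 1 * x by rewrite -(h 1 x).1 mul1r.
have e2 x : f x = x * f 1 by rewrite -(h x 1).2 mulr1.
split => // x; by rewrite /comm -e1 -e2 subrr.
Qed.

Lemma cback (F : fieldType) (A : algType F) (f : A -> A) (c : A) :
  linear f -> in_center c -> (forall x, f x = c * x) -> is_cent f.
Proof.
move=> hl hc hf; split => // x y; rewrite !hf mulrA; split => //.
by rewrite mulrA (centC x hc).
Qed.

Lemma center_ZJ (R : pzRingType) (c : R) : in_center c -> in_ZJ c.
Proof. by move=> h x y; rewrite h /comm mul0r mulr0 subr0. Qed.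

Lemma center_ZQ (R : pzRingType) (c : R) : in_center c -> in_ZQ c.
Proof. by move=> h x y; rewrite h. Qed.

Lemma form_center (F : fieldType) (A : algType F) (hF : (2 \notin [pchar F])%N)
  (f : A -> A) (c : A) : in_center c ->
  (forall x, f x *+ 2 = c * x + x * c) -> forall x, f x = c * x.
Proof.
by move=> hc hf x; apply: (@two_cancel F A hF); rewrite hf (centC x hc) mulr2n.
Qed.

Lemma center_form (F : fieldType) (A : algType F)
  (f : A -> A) (c : A) : in_center c ->
  (forall x, f x = c * x) -> forall x, f x *+ 2 = c * x + x * c.
Proof. by move=> hc hf x; rewrite hf (centC x hc) mulr2n. Qed.

Unset Implicit Arguments.

Theorem corollary3p2 (F : fieldType) (A : algType F) (hF : (2 \notin [pchar F])%N) :
  ((forall a : A, in_ZJ a <-> in_center a) ->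
     forall f : A -> A, is_jcent f <-> is_cent f) /\
  ((forall a : A, in_ZQ a <-> in_center a) ->
     forall f : A -> A, is_qjcent f <-> is_cent f) /\
  ((forall a : A, in_ZQ a <-> in_ZJ a) ->
     forall f : A -> A, is_qjcent f <-> is_jcent f).
Proof.
split; [|split].
- move=> H f; split.
  + move=> hj; have hc : in_center (f 1) by apply/H; exact: (jZJ hj).
    apply: (cback hj.1 hc); exact: (form_center hF f hc (jform hj)).
  + move=> hc; have [hc1 e] := cform hc.
    apply: (jback hF hc.1 (center_ZJ hc1)); exact: (center_form f hc1 e).
- move=> H f; split.
  + move=> hj; have hc : in_center (f 1) by apply/H; exact: (qZQ hj).
    apply: (cback hj.1 hc); exact: (form_center hF f hc (qform hj)).
  + move=> hc; have [hc1 e] := cform hc.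
    apply: (qback hF hc.1 (center_ZQ hc1)); exact: (center_form f hc1 e).
- move=> H f; split.
  + move=> hj; apply: (jback hF hj.1 _ (qform hj)); apply/H; exact: (qZQ hj).
  + move=> hj; apply: (qback hF hj.1 _ (jform hj)); apply/H; exact: (jZJ hj).
Qed.
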